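(* For $\mathcal{M}=\{k\}\subseteq\mathbb{N}_0$, $k\in\mathbb{N}_0$, the sequence $\mathcal{M}^i$ reaches its limit $\mathcal{M}^\infty=\mathcal{M}_k$ after finitely many steps; specifically $\varphi(\{0\})=\varphi(\{1\})=1$ and $\varphi(\{k\})=5$ for every $k\ge2$.
   Context: A one-heap game is a set $\mathcal{M}\subseteq\mathbb{N}_0$ of moves; from position $x$ one may move to $y\in\mathbb{N}_0$ iff $x-y\in\mathcal{M}$. Misère play: a player who cannot move wins. If $0\in\mathcal{M}$, $P(\mathcal{M})=\varnothing$. Otherwise: a position is an N-position if it has no option or some option is a P-position; otherwise it is a P-position; $P(\mathcal{M})$ is the set of P-positions. $\mathcal{M}^\star=P(\mathcal{M})$, $\mathcal{M}^0=\mathcal{M}$, $\mathcal{M}^i=(\mathcal{M}^{i-1})^\star$; $\mathcal{M}^\infty$ is the pointwise limit (set of $x$ lying in $\mathcal{M}^i$ for all sufficiently large $i$). $\varphi(\mathcal{M})=\min\{i\in\mathbb{N}_0:\ \mathcal{M}^i=\mathcal{M}^\infty\}$. $\mathcal{M}_0=\varnothing$ and for $k\ge1$, $\mathcal{M}_k=\{i(3k-1)+j:\ i\in\mathbb{N}_0,\ k\le j\le2k-1\}$. *)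

(* Defs.v *)
From mathcomp Require Import all_boot.
Set Implicit Arguments. Unset Strict Implicit. Unset Printing Implicit Defensive.

(* Auxiliary fuel-based evaluation of "x is a P-position of M", valid when
   0 ∉ M (so that every option y of x satisfies y < x) and fuel > x.
   x is N if it has no option or some option is P; otherwise P. *)
Fixpoint isP_fuel (M : pred nat) (fuel : nat) (x : nat) : bool :=
  match fuel with
  | 0 => false
  | f.+1 =>
      has (fun y => M (x - y)) (iota 0 x) &&
      all (fun y => M (x - y) ==> ~~ isP_fuel M f y) (iota 0 x)
  end.

Definition Pset (M : pred nat) : pred nat :=
  fun x => ~~ M 0 && isP_fuel M x.+1 x.

Definition Miter (i : nat) (M : pred nat) : pred nat := iter i Pset M.

Definition Minf (M : pred nat) (x : nat) : Prop :=
  exists N, forall i, N <= i -> Miter i M x.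

Definition reaches_limit_at (M : pred nat) (i : nat) : Prop :=
  forall x, Miter i M x <-> Minf M x.

Definition phi_is (M : pred nat) (n : nat) : Prop :=
  reaches_limit_at M n /\ forall i, i < n -> ~ reaches_limit_at M i.

(* M_k = { i(3k-1) + j : i ∈ ℕ₀, k ≤ j ≤ 2k-1 }  (j ≤ 2k-1 written j < 2k,
   so that M_0 = ∅ as required). *)
Definition Mk (k : nat) (x : nat) : Prop :=
  exists i j, k <= j < 2 * k /\ x = i * (3 * k - 1) + j.

(* Main.v *)
Require Import Defs.
From mathcomp Require Import all_boot zify.
From Stdlib Require Import Classical.
Set Implicit Arguments. Unset Strict Implicit.

Ltac absmod := repeat match goal with
 | H : context [modn ?a ?b] |- _ => let r := fresh "r" in set r := (a %% b) in *; clearbody r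
 | |- context [modn ?a ?b] => let r := fresh "r" in set r := (a %% b) in *; clearbody r
 end.
Ltac clean := repeat match goal with
 | H : forall _, _ |- _ => clear H
 | H : is_true (_ && _) |- _ => case/andP: H => ? ?
 end.
Ltac mlia := absmod; clean; lia.

Lemma isP_spec (M : pred nat) (MP S : nat -> Prop) :
  (forall m, M m <-> MP m) -> ~ MP 0 ->
  (forall x, S x <-> (exists m, m <= x /\ MP m) /\ (forall m, m <= x -> MP m -> ~ S (x - m))) ->
  forall f x, x < f -> (isP_fuel M f x <-> S x).
Proof.
move=> HM H0 HS; elim=> [|f IH] x Hx //.
rewrite /= (HS x); split.
- move/andP=> [/hasP [y Hy HMy] /allP Hall]; rewrite mem_iota in Hy.
  split; first by exists (x - y); split; [lia| apply/HM].
  move=> m Hm HMm HSm.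
  have Hm0 : m <> 0 by move=> E; apply: H0; rewrite -E.
  have := Hall (x - m); rewrite mem_iota.
  have -> : x - (x - m) = m by lia.
  have /HM -> : MP m by [].
  move=> /(_ ltac:(lia)) /negP; apply; apply/IH; [lia|done].
- move=> [[m [Hm HMm]] Hall]; apply/andP; split.
  + have Hm0 : m <> 0 by move=> E; apply: H0; rewrite -E.
    apply/hasP; exists (x - m); first by rewrite mem_iota; lia.
    have -> : x - (x - m) = m by lia. by apply/HM.
  + apply/allP=> y; rewrite mem_iota => Hy; apply/implyP=> /HM HMy.
    apply/negP=> /IH Hy'. have Hy'' := Hy' ltac:(lia).
    apply: (Hall (x - y)) => //; first lia.
    by have -> : x - (x - y) = y by lia.
Qed.

Lemma Pset_char (M : pred nat) (MP S : nat -> Prop) :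
  (forall m, M m <-> MP m) -> ~ MP 0 ->
  (forall x, S x -> (exists m, m <= x /\ MP m) /\ (forall m, m <= x -> MP m -> ~ S (x - m))) ->
  (forall x, ~ S x -> (forall m, m <= x -> ~ MP m) \/ (exists m, m <= x /\ MP m /\ S (x - m))) ->
  forall x, Pset M x <-> S x.
Proof.
move=> HM H0 H1 H2 x.
have HM0 : M 0 = false by apply/negP=> /HM.
have HS : forall y, S y <-> (exists m, m <= y /\ MP m) /\ (forall m, m <= y -> MP m -> ~ S (y - m)).
  move=> y; split; first exact: H1.
  move=> [[m [Hm HMm]] Hall]; apply: NNPP => NS.
  case: (H2 _ NS) => [Hn|[m' [Hm' [HMm' HS']]]]; first exact: (Hn m).
  exact: (Hall m').
rewrite /Pset HM0 [~~ false]/= andTb. exact: (@isP_spec M MP S HM H0 HS x.+1 x (ltnSn x)).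
Qed.

Lemma modB x m d r s : 0 < d -> m <= x -> x %% d = r -> m %% d = s ->
  (x - m) %% d = if s <= r then r - s else r + d - s.
Proof.
move=> d0 Hmx Hr Hs.
have Hrd : r < d by rewrite -Hr ltn_pmod.
have Hsd : s < d by rewrite -Hs ltn_pmod.
have Ex := divn_eq x d; have Em := divn_eq m d.
rewrite Hr in Ex; rewrite Hs in Em.
move: Ex Em; move: (x %/ d) (m %/ d) => a b Ex Em.
case: ltngtP => Hsr.
-
  have Hba : b <= a.
    case: (leqP b a) => // Hab; have : (a.+1) * d <= b * d by rewrite leq_mul2r Hab orbT.
    rewrite mulSn; lia.
  have Hmul : b * d <= a * d by rewrite leq_mul2r Hba orbT.
  have -> : x - m = (a - b) * d + (r - s) by rewrite mulnBl; lia.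
  rewrite modnMDl modn_small //; lia.
-
  have Hba : b < a.
    case: (leqP a b) => // Hab; have : a * d <= b * d by rewrite leq_mul2r Hab orbT.
    lia.
  have Hmul : b.+1 * d <= a * d by rewrite leq_mul2r Hba orbT.
  rewrite mulSn in Hmul.
  have -> : x - m = (a - b.+1) * d + (r + d - s) by rewrite mulnBl mulSn; lia.
  rewrite modnMDl modn_small //; lia.
- subst s.
  have Hba : b <= a.
    case: (leqP b a) => // Hab; have : (a.+1) * d <= b * d by rewrite leq_mul2r Hab orbT.
    rewrite mulSn; lia.
  have Hmul : b * d <= a * d by rewrite leq_mul2r Hba orbT.
  have -> : x - m = (a - b) * d + (r - r) by rewrite mulnBl; lia.
  rewrite modnMDl modn_small //; lia.
Qed.

Lemma modB' x m d : 0 < d -> m <= x ->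
  (x - m) %% d = if m %% d <= x %% d then x %% d - m %% d else x %% d + d - m %% d.
Proof. by move=> d0 H; apply: modB. Qed.

Lemma modE a b d x : b < d -> x = a * d + b -> x %% d = b.
Proof. by move=> Hb ->; rewrite modnMDl modn_small. Qed.

Lemma mod_lb x d c : 0 < d -> x %% d = c -> c < x -> d + c <= x.
Proof.
move=> d0 Hc Hcx; case: (leqP d x) => Hdx.
- have := @modB' x d d d0 Hdx; rewrite modnn Hc leq0n subn0 => E.
  have := leq_mod (x - d) d; rewrite E; lia.
- by rewrite modn_small in Hc; lia.
Qed.

Lemma mod_lb2 x d c j : 0 < d -> x %% d = c -> c + j * d < x -> c + j.+1 * d <= x.
Proof.
move=> d0 Hc H.
have Hjx : j * d <= x by lia.
have := @modB' x (j*d) d d0 Hjx; rewrite modnMl leq0n subn0 Hc => E.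
have := @mod_lb (x - j*d) d c d0 E ltac:(lia). rewrite mulSn; lia.
Qed.

Definition A1 k x := k <= x %% (2*k).
Definition A2 k x := (k <= x < 2*k) \/ x %% (2*k) = 2*k - 1.
Definition A3 k x := (k <= x < 2*k) \/ (4*k-1 <= x < 5*k-1) \/ (7*k-2 <= x /\ x %% (2*k) = k-2).
Definition A4 k x := (k <= x < 2*k) \/ (4*k-1 <= x < 5*k-1) \/ (7*k-2 <= x < 8*k-2) \/ x = 10*k-3.
Definition Mq k x := k <= x %% (3*k-1) < 2*k.

Lemma step1 k : 2 <= k -> forall x, Pset (pred1 k) x <-> A1 k x.
Proof.
move=> k2; have d0 : 0 < 2 * k by lia.
have Hkk : k %% (2 * k) = k by rewrite modn_small; lia.
apply: (@Pset_char (pred1 k) (fun m => m = k) (A1 k)).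
- move=> m; rewrite /pred1 /=; split => [/eqP|->] //.
- lia.
- move=> x Hx; rewrite /A1 in Hx; have := leq_mod x (2*k); have := ltn_pmod x d0 => H1 H2.
  split; first by exists k; split; [lia|].
  move=> m Hm ->; rewrite /A1 modB' ?Hkk //; last lia; case: ifP; lia.
- move=> x Hx; rewrite /A1 in Hx; have := leq_mod x (2*k); have := ltn_pmod x d0 => H1 H2.
  case: (ltnP x k) => Hxk; first by left => m Hm E; lia.
  right; exists k; split; [lia|split; [done|]].
  rewrite /A1 modB' ?Hkk //; case: ifP; lia.
Qed.

Lemma A1_ge k m : A1 k m -> k <= m.
Proof. rewrite /A1 => H; have := leq_mod m (2*k); lia. Qed.

Lemma A2_no k y : 1 <= k -> y %% (2*k) < k -> ~ A2 k y.
Proof.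
move=> k1 H [H1|H1]; last lia.
by rewrite modn_small in H; lia.
Qed.

Lemma step2 k (M : pred nat) : 2 <= k -> (forall m, M m <-> A1 k m) ->
  forall x, Pset M x <-> A2 k x.
Proof.
move=> k2 HM; have d0 : 0 < 2 * k by lia.
have Hkk : k %% (2 * k) = k by rewrite modn_small; lia.
have HA1k : A1 k k by rewrite /A1 Hkk.
apply: (@Pset_char M (A1 k) (A2 k)) => //.
- by move/A1_ge; lia.
- move=> x Hx; have := leq_mod x (2*k); have := ltn_pmod x d0 => H1 H2.
  have Hkx : k <= x.
    case: Hx => [|Hx]; first lia.
    lia.
  split; first by exists k.
  move=> m Hm HAm; have := A1_ge HAm; rewrite /A1 in HAm => Hkm.
  have := ltn_pmod m d0 => H3.
  apply: A2_no; first lia.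
  have := leq_mod m (2*k) => H4.
  rewrite modB' //; case: Hx => Hx.
  + rewrite (modn_small (_ : x < 2*k)) in H1 H2 *; last lia.
    case: ifP; lia.
  + rewrite Hx; case: ifP; lia.
- move=> x Hx; have := leq_mod x (2*k); have := ltn_pmod x d0 => H1 H2.
  case: (ltnP x k) => Hxk.
    by left => m Hm /A1_ge; lia.
  have Hx2 : 2 * k <= x.
    case: (ltnP x (2*k)) => // Hx2; exfalso; apply: Hx; left; lia.
  have Hr : x %% (2*k) != 2*k - 1 by apply/eqP => E; apply: Hx; right.
  right; case: (ltnP (x %% (2*k)) k) => Hrk.
  + exists (x - k); split; first lia.
    have -> : x - (x - k) = k by lia.
    split; last by left; lia.
    rewrite /A1 modB' // Hkk; case: ifP; lia.
  + exists (x - (x %% (2*k)).+1); split; first lia.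
    have -> : x - (x - (x %% (2*k)).+1) = (x %% (2*k)).+1 by lia.
    split; last by left; lia.
    rewrite /A1 modB'; last lia; last done.
    rewrite (modn_small (_ : (x %% (2*k)).+1 < 2*k)); last lia.
    case: ifP; lia.
Qed.

Lemma A2_ge k m : 1 <= k -> A2 k m -> k <= m.
Proof. move=> k1 [H|H]; first lia. have := leq_mod m (2*k); lia. Qed.

Lemma A2_big k m : 1 <= k -> A2 k m -> 2 * k <= m -> m %% (2*k) = 2*k - 1 /\ 4 * k - 1 <= m.
Proof.
move=> k1 [H|H] Hm; first lia.
split=> //; have := @mod_lb m (2*k) (2*k-1) ltac:(lia) H ltac:(lia); lia.
Qed.

Lemma mid_res k y : 2 <= k -> 4*k-1 <= y < 5*k-1 -> y %% (2*k) = 2*k-1 \/ y %% (2*k) <= k-2.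
Proof.
move=> k2 Hy; case: (ltnP y (4*k)) => Hy4.
- left; apply: (@modE 1); lia.
- right; rewrite (@modE 2 (y - 4*k)); lia.
Qed.

Definition A2' K x := (K+2 <= x < 2*K+4) \/ x %% (2*K+4) = 2*K+3.
Definition A3' K x := (K+2 <= x < 2*K+4) \/ (4*K+7 <= x < 5*K+9) \/ (7*K+12 <= x /\ x %% (2*K+4) = K).

Lemma A2'E K x : A2 K.+2 x <-> A2' K x.
Proof.
rewrite /A2 /A2'; have -> : 2 * K.+2 = 2*K+4 by lia.
lia.
Qed.

Lemma notA3 K y : (y < K+2 \/ 2*K+4 <= y) -> (y < 4*K+7 \/ 5*K+9 <= y) ->
  (y < 7*K+12 \/ y %% (2*K+4) <> K) -> ~ A3' K y.
Proof.
move=> H1 H2 H3 [/andP [? ?]|[/andP [? ?]|[? ?]]]; lia.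
Qed.

Lemma A2'_ge K m : A2' K m -> K+2 <= m.
Proof. move=> [/andP [? ?]|H]; first lia. have := leq_mod m (2*K+4); lia. Qed.

Lemma A2'_big K m : A2' K m -> 2*K+4 <= m -> m %% (2*K+4) = 2*K+3 /\ 4*K+7 <= m.
Proof.
move=> [/andP [? ?]|H] Hm; first lia.
split=> //; have := @mod_lb m (2*K+4) (2*K+3) ltac:(lia) H ltac:(lia); lia.
Qed.

Lemma mid_res' K y : 4*K+7 <= y < 5*K+9 -> y %% (2*K+4) = 2*K+3 \/ y %% (2*K+4) <= K.
Proof.
move=> /andP [Hy1 Hy2]; case: (ltnP y (4*K+8)) => Hy4.
- left; apply: (@modE 1); lia.
- right; rewrite (@modE 2 (y - (4*K+8))); lia.
Qed.

Lemma step3 K (M : pred nat) : (forall m, M m <-> A2' K m) ->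
  forall x, Pset M x <-> A3' K x.
Proof.
move=> HM; have d0 : 0 < 2*K+4 by lia.
have HA2k : A2' K (K+2) by left; lia.
have HA2k' : A2' K (2*K+3) by left; lia.
apply: (@Pset_char M (A2' K) (A3' K)) => //.
- by move/A2'_ge; lia.
- move=> x Hx; have := leq_mod x (2*K+4); have := ltn_pmod x d0 => H1 H2.
  have Hkx : K+2 <= x by case: Hx => [/andP [? ?]|[/andP [? ?]|[? ?]]]; lia.
  split; first by exists (K+2).
  move=> m Hm HAm; have := A2'_ge HAm => Hkm.
  case: Hx => [/andP [Hx1 Hx2]|[/andP [Hx1 Hx2]|[Hx7 Hxr]]].
  + apply: notA3; lia.
  + case: (ltnP m (2*K+4)) => Hm2; first by apply: notA3; lia.
    have [_ ?] := A2'_big HAm Hm2; apply: notA3; lia.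
  + case: (ltnP m (2*K+4)) => Hm2.
    * have Hy : (x - m) %% (2*K+4) = 3*K+4 - m.
        rewrite modB' // Hxr modn_small //; case: ifP; lia.
      apply: notA3; rewrite ?Hy; lia.
    * have [Hmr Hm4] := A2'_big HAm Hm2.
      have Hy : (x - m) %% (2*K+4) = K+1.
        rewrite modB' // Hxr Hmr; case: ifP; lia.
      apply: notA3; rewrite ?Hy; try lia.
      - case: (ltnP (x - m) (2*K+4)) => Hy1; last lia.
        rewrite modn_small in Hy; lia.
      - case: (ltnP (x - m) (4*K+7)) => Hy1; first lia.
        case: (ltnP (x - m) (5*K+9)) => Hy2; last lia.
        have := @mid_res' K (x - m) ltac:(lia); rewrite Hy; lia.
- move=> x Hx; have := leq_mod x (2*K+4); have := ltn_pmod x d0 => H1 H2.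
  case: (ltnP x (K+2)) => Hxk.
    by left => m Hm /A2'_ge; lia.
  right.
  have Hx2 : 2*K+4 <= x.
    case: (ltnP x (2*K+4)) => // Hx2; exfalso; apply: Hx; left; lia.
  case: (ltnP x (4*K+7)) => Hx4.
    case: (ltnP x (3*K+6)) => Hx3.
      exists (K+2); split; first lia; split=> //.
      by left; lia.
    exists (2*K+3); split; first lia; split=> //.
    by left; lia.
  have Hx5 : 5*K+9 <= x.
    case: (ltnP x (5*K+9)) => // Hx5; exfalso; apply: Hx; right; left; lia.
  case: (ltnP x (7*K+12)) => Hx7.
    case: (ltnP x (6*K+11)) => Hx6.
      exists (K+2); split; first lia; split=> //.
      by right; left; lia.
    exists (2*K+3); split; first lia; split=> //.
    by right; left; lia.
  have Hr : x %% (2*K+4) <> K.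
    move=> E; apply: Hx; right; right; lia.
  move: H1 H2 Hr; move Er : (x %% (2*K+4)) => r H1 H2 Hr.
  case: (ltnP r K) => Hr1.
  + exists (r + K + 4); split; first lia; split; first by left; lia.
    have Hy : (x - (r + K + 4)) %% (2*K+4) = K.
      rewrite modB'; last lia; last lia.
      rewrite (modn_small (_ : r + K + 4 < 2*K+4)); last lia.
      rewrite Er; case: ifP; lia.
    have := @mod_lb2 _ _ _ 2 d0 Hy ltac:(lia).
    right; right; lia.
  case: (ltnP r (2*K+2)) => Hr2.
  + exists (x - r.+1); split; first lia.
    have -> : x - (x - r.+1) = r.+1 by lia.
    split; last by left; lia.
    right; rewrite modB'; last lia; last done.
    rewrite (modn_small (_ : r.+1 < 2*K+4)); last lia.
    rewrite Er; case: ifP; lia.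
  + exists (r - K); split; first lia; split; first by left; lia.
    have Hy : (x - (r - K)) %% (2*K+4) = K.
      rewrite modB'; last lia; last lia.
      rewrite (modn_small (_ : r - K < 2*K+4)); last lia.
      rewrite Er; case: ifP; lia.
    have := @mod_lb2 _ _ _ 2 d0 Hy ltac:(lia).
    right; right; lia.
Qed.

Definition A4' K x := (K+2 <= x < 2*K+4) \/ (4*K+7 <= x < 5*K+9) \/ (7*K+12 <= x < 8*K+14) \/ x = 10*K+17.

Lemma A3'_ge K m : A3' K m -> K+2 <= m.
Proof. move=> [/andP [? ?]|[/andP [? ?]|[? ?]]]; lia. Qed.

Lemma A3'_cases K m : A3' K m ->
  (K+2 <= m < 2*K+4) \/ (4*K+7 <= m < 5*K+9) \/ m = 7*K+12 \/ 9*K+16 <= m.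
Proof.
move=> [H|[H|[H1 H2]]]; [by left|by right; left|].
right; right; case: (ltnP (7*K+12) m) => H3; last lia.
have := @mod_lb2 m (2*K+4) K 3 ltac:(lia) H2 ltac:(lia); lia.
Qed.

Lemma third_opt K x y : 7*K+12 <= x -> y <= x - (7*K+12) ->
  y %% (2*K+4) = (x - (7*K+12)) %% (2*K+4) -> A3' K (x - y).
Proof.
move=> Hx Hy Hr; right; right; split; first lia.
have d0 : 0 < 2*K+4 by lia.
have Hw : (x - (7*K+12) - y) %% (2*K+4) = 0.
  rewrite modB' // Hr leqnn; lia.
have -> : x - y = (7*K+12) + (x - (7*K+12) - y) by lia.
by rewrite -modnDmr Hw addn0 (@modE 3 K); lia.
Qed.

Lemma step4 K (M : pred nat) : (forall m, M m <-> A3' K m) ->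
  forall x, Pset M x <-> A4' K x.
Proof.
move=> HM; have d0 : 0 < 2*K+4 by lia.
have HA3k : A3' K (K+2) by left; lia.
have HA3k' : A3' K (2*K+3) by left; lia.
apply: (@Pset_char M (A3' K) (A4' K)) => //.
- by move/A3'_ge; lia.
- move=> x Hx.
  have Hkx : K+2 <= x by case: Hx => [/andP [? ?]|[/andP [? ?]|[/andP [? ?]|?]]]; lia.
  split; first by exists (K+2).
  move=> m Hm /A3'_cases HAm; rewrite /A4' in Hx *; lia.
- move=> x Hx.
  case: (ltnP x (K+2)) => Hxk.
    by left => m Hm /A3'_ge; lia.
  right.
  have Hx2 : 2*K+4 <= x.
    case: (ltnP x (2*K+4)) => // Hx2; exfalso; apply: Hx; left; lia.
  case: (ltnP x (4*K+7)) => Hx4.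
    case: (ltnP x (3*K+6)) => Hx3.
      exists (K+2); split; first lia; split=> //.
      by left; lia.
    exists (2*K+3); split; first lia; split=> //.
    by left; lia.
  have Hx5 : 5*K+9 <= x.
    case: (ltnP x (5*K+9)) => // Hx5; exfalso; apply: Hx; right; left; lia.
  case: (ltnP x (7*K+12)) => Hx7.
    case: (ltnP x (6*K+11)) => Hx6.
      exists (K+2); split; first lia; split=> //.
      by right; left; lia.
    exists (2*K+3); split; first lia; split=> //.
    by right; left; lia.
  have Hx8 : 8*K+14 <= x.
    case: (ltnP x (8*K+14)) => // Hx8; exfalso; apply: Hx; right; right; left; lia.
  case: (ltnP x (10*K+17)) => Hx10.
    case: (ltnP x (9*K+16)) => Hx9.
      exists (K+2); split; first lia; split=> //.
      by right; right; left; lia.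
    exists (2*K+3); split; first lia; split=> //.
    by right; right; left; lia.
  have Hx10' : 10*K+18 <= x.
    case: (ltnP x (10*K+18)) => // Hx11; exfalso; apply: Hx; right; right; right; lia.
  have Hz := leq_mod (x - (7*K+12)) (2*K+4).
  have Hz' := ltn_pmod (x - (7*K+12)) d0.
  move: Hz Hz'; move Er : ((x - (7*K+12)) %% (2*K+4)) => r Hz Hz'.
  case: (ltnP r (K+2)) => Hr1.
  + case: (ltnP r (K+1)) => Hr2.
    * exists (x - (r + 4*K+8)); split; first lia.
      have Hle := @mod_lb2 _ _ _ 1 d0 Er ltac:(lia).
      have -> : x - (x - (r + 4*K+8)) = r + 4*K+8 by lia.
      split; last by right; left; lia.
      apply: third_opt; first lia; first lia.
      rewrite Er; apply: (@modE 2); lia.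
    * have Hle := @mod_lb2 _ _ _ 1 d0 Er ltac:(lia).
      case: (ltnP (x - (7*K+12)) (7*K+13)) => Hz7.
      - have Hz5 : x - (7*K+12) = 5*K+9.
          case: (ltnP (5*K+9) (x - (7*K+12))) => H5; last lia.
          have := @mod_lb2 _ _ _ 2 d0 Er ltac:(lia); lia.
        exists (5*K+8); split; first lia; split; first by right; left; lia.
        right; right; left; lia.
      - exists (x - (7*K+13)); split; first lia.
        have -> : x - (x - (7*K+13)) = 7*K+13 by lia.
        split; last by right; right; left; lia.
        apply: third_opt; first lia; first lia.
        rewrite Er; apply: (@modE 3); lia.
  + exists (x - r); split; first lia.
    have -> : x - (x - r) = r by lia.
    split; last by left; lia.
    apply: third_opt; first lia; first lia.
    by rewrite Er modn_small.
Qed.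

Lemma Mq_ge k m : Mq k m -> k <= m.
Proof. rewrite /Mq => /andP [H _]; have := leq_mod m (3*k-1); lia. Qed.

Lemma step5 k (M : pred nat) : 1 <= k -> (forall m, k <= m < 2*k -> M m) ->
  (forall m, M m -> Mq k m) -> forall x, Pset M x <-> Mq k x.
Proof.
move=> k1 HB HMq; have q0 : 0 < 3*k-1 by lia.
have HMk : M k by apply: HB; lia.
apply: (@Pset_char M (fun m => M m) (Mq k)) => //.
- by move/HMq/Mq_ge; lia.
- move=> x Hx; have Hkx := Mq_ge Hx.
  split; first by exists k.
  move=> m Hm /HMq HAm; rewrite /Mq in Hx HAm *.
  have := ltn_pmod x q0; have := ltn_pmod m q0.
  rewrite modB' //; case: ifP; lia.
- move=> x Hx; rewrite /Mq in Hx.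
  have := ltn_pmod x q0; have := leq_mod x (3*k-1) => H1 H2.
  case: (ltnP x k) => Hxk.
    by left => m Hm /HMq/Mq_ge; lia.
  right; case: (ltnP (x %% (3*k-1)) k) => Hr.
  + have Hxq : 3*k-1 <= x.
      case: (ltnP x (3*k-1)) => // Hxq; rewrite modn_small in Hr; lia.
    exists (2*k-1); split; first lia; split; first by apply: HB; lia.
    have Hm2 : 2*k-1 <= x by lia.
    rewrite /Mq modB' //.
    rewrite (modn_small (_ : 2*k-1 < 3*k-1)); last lia.
    case: ifP; lia.
  + exists k; split; [lia|split; [exact: HMk|]].
    rewrite /Mq modB' // (modn_small (_ : k < 3*k-1)); last lia.
    case: ifP; lia.
Qed.

Lemma MiterS i M x : Miter i.+1 M x = Pset (Miter i M) x.
Proof. by []. Qed.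

Lemma MkE k x : Mk k x <-> Mq k x.
Proof.
case: k => [|k].
  split; first by case=> [i [j [H _]]]; lia.
  by rewrite /Mq; lia.
split.
- case=> [i [j [/andP [H1 H2] ->]]]; rewrite /Mq (@modE i j); lia.
- rewrite /Mq => H; exists (x %/ (3 * k.+1 - 1)), (x %% (3 * k.+1 - 1)); split=> //.
  exact: divn_eq.
Qed.

Lemma stable M (S : nat -> Prop) i :
  (forall x, Miter i M x <-> S x) ->
  (forall M' : pred nat, (forall x, M' x <-> S x) -> forall x, Pset M' x <-> S x) ->
  forall n x, Miter (n + i) M x <-> S x.
Proof.
move=> Hi Hfix; elim=> [|n IH] x; first by rewrite add0n.
by rewrite addSn MiterS; apply: Hfix.
Qed.

Lemma MinfE M (S : nat -> Prop) i :
  (forall n x, Miter (n + i) M x <-> S x) -> forall x, Minf M x <-> S x.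
Proof.
move=> H x; split.
- case=> N HN; have := HN (maxn N i) (leq_maxl _ _).
  have -> : maxn N i = (maxn N i - i) + i by have := leq_maxr N i; lia.
  by move/H.
- move=> Sx; exists i => j Hj; have -> : j = (j - i) + i by lia.
  by apply/H.
Qed.

Lemma fixMq k : 1 <= k -> forall M' : pred nat, (forall x, M' x <-> Mq k x) ->
  forall x, Pset M' x <-> Mq k x.
Proof.
move=> k1 M' HM'; apply: step5 => // [m Hm|m /HM' //].
apply/HM'; rewrite /Mq modn_small; lia.
Qed.

Lemma fixF : forall M' : pred nat, (forall x, M' x <-> False) ->
  forall x, Pset M' x <-> False.
Proof.
move=> M' HM'; apply: (@Pset_char M' (fun _ => False) (fun _ => False)).
- exact: HM'.
- by [].
- by [].
- by move=> x _; left=> m _ [].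
Qed.

Lemma iter0 : forall n x, Miter (n + 1) (pred1 0) x <-> False.
Proof.
apply: stable; last exact: fixF.
by move=> x; rewrite MiterS /Pset /=.
Qed.

Lemma iter1 : forall n x, Miter (n + 1) (pred1 1) x <-> Mq 1 x.
Proof.
apply: stable; last exact: fixMq.
move=> x; rewrite MiterS /=; apply: step5 => // m.
- by move=> Hm; apply/eqP; lia.
- by move/eqP => ->.
Qed.

Section Big.
Variable K : nat.
Let k := K.+2.

Lemma I1 x : Miter 1 (pred1 k) x <-> A1 k x.
Proof. exact: step1. Qed.
Lemma I2 x : Miter 2 (pred1 k) x <-> A2 k x.
Proof. rewrite MiterS; apply: step2 => //; exact: I1. Qed.
Lemma I3 x : Miter 3 (pred1 k) x <-> A3' K x.
Proof. rewrite MiterS; apply: step3 => m; rewrite -A2'E; exact: I2. Qed.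
Lemma I4 x : Miter 4 (pred1 k) x <-> A4' K x.
Proof. rewrite MiterS; apply: step4 => m; exact: I3. Qed.
Lemma I5 x : Miter 5 (pred1 k) x <-> Mq k x.
Proof.
rewrite MiterS; apply: step5 => [|m Hm|m /I4 Hm]; first by rewrite /k.
- apply/I4; left; rewrite /k in Hm; lia.
- rewrite /Mq /k; have -> : 3 * K.+2 - 1 = 3*K+5 by lia.
  case: Hm => [/andP [? ?]|[/andP [? ?]|[/andP [? ?]|->]]].
  + rewrite modn_small; lia.
  + rewrite (@modE 1 (m - (3*K+5))); lia.
  + rewrite (@modE 2 (m - 2*(3*K+5))); lia.
  + rewrite (@modE 3 (K+2)); lia.
Qed.
Lemma Iall n x : Miter (n + 5) (pred1 k) x <-> Mq k x.
Proof. move: n x; apply: stable; first exact: I5. apply: fixMq; rewrite /k; lia. Qed.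
End Big.

Theorem corollary10 :
  (forall k : nat, forall x : nat, Minf (pred1 k) x <-> Mk k x) /\
  phi_is (pred1 0) 1 /\ phi_is (pred1 1) 1 /\
  (forall k : nat, 2 <= k -> phi_is (pred1 k) 5).
Proof.
have Inf0 := MinfE iter0.
have Inf1 := MinfE iter1.
have InfK K := MinfE (Iall K).
split; [|split; [|split]].
- case=> [|[|K]] x; rewrite MkE.
  + rewrite Inf0 /Mq; lia.
  + exact: Inf1.
  + exact: InfK.
- split.
  + by move=> x; rewrite Inf0 (iter0 0 x).
  + case=> // _ /(_ 0); rewrite Inf0 /=; by case=> H _; apply: H.
- split.
  + by move=> x; rewrite Inf1 (iter1 0 x).
  + case=> // _ /(_ 3); rewrite Inf1 /= /Mq; case; lia.
- case=> [|[|K]] // _; split.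
  + by move=> x; rewrite InfK (Iall K 0 x).
  + move=> i; case: i => [|[|[|[|[|i]]]]] // _ H.
    * have := H K.+3; rewrite InfK /= /Mq modn_small; last lia.
      by case=> _ /(_ ltac:(lia)) /eqP; lia.
    * have := H (3*K+6); rewrite InfK I1 /Mq /A1.
      rewrite (@modE 1 (K+2) (2*K.+2) (3*K+6)); try lia.
      rewrite (@modE 1 1 (3*K.+2-1) (3*K+6)); try lia.
    * have := H (6*K+11); rewrite InfK I2 /Mq /A2.
      rewrite (@modE 2 (2*K+3) (2*K.+2) (6*K+11)); try lia.
      rewrite (@modE 2 1 (3*K.+2-1) (6*K+11)); try lia.
    * have := H (9*K+16); rewrite InfK I3 /Mq /A3'.
      rewrite (@modE 4 K (2*K+4) (9*K+16)); try lia.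
      rewrite (@modE 3 1 (3*K.+2-1) (9*K+16)); try lia.
    * have := H (13*K+22); rewrite InfK I4 /Mq /A4'.
      rewrite (@modE 4 (K+2) (3*K.+2-1) (13*K+22)); try lia.
Qed.
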